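(* Let $G$ be a bipartite cactus graph with $n\ge 4$ vertices, $m$ edges and $b$ bridges. Then $m\le 2\left\lfloor \frac{2(n-1-b)}{3}\right\rfloor + b$.
   Context: A cactus graph is a connected simple graph in which every edge belongs to at most one cycle; a bi-cactus is a cactus that is also bipartite. A bridge is an edge whose removal disconnects the graph. *)

(* Defs.v *)
From mathcomp Require Import all_boot.
Set Implicit Arguments. Unset Strict Implicit. Unset Printing Implicit Defensive.

Section Graphs.
Variable T : finType.

Definition simple_graph (e : rel T) : Prop := symmetric e /\ irreflexive e.

Definition edges (e : rel T) : {set {set T}} :=
  [set [set x; y] | x in T, y in T & e x y].

Definition connected_graph (e : rel T) : Prop := forall x y, connect e x y.

Definition is_cycle (e : rel T) (s : seq T) : bool :=
  [&& uniq s, 3 <= size s & cycle e s].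

Definition cycle_edges (s : seq T) : {set {set T}} :=
  [set [set x; next s x] | x in s].

Definition cactus (e : rel T) : Prop :=
  connected_graph e /\
  forall s1 s2, is_cycle e s1 -> is_cycle e s2 ->
    forall E0, E0 \in cycle_edges s1 -> E0 \in cycle_edges s2 ->
      cycle_edges s1 = cycle_edges s2.

Definition bipartite (e : rel T) : Prop :=
  exists f : T -> bool, forall x y, e x y -> f x != f y.

Definition remove_edge (e : rel T) (E0 : {set T}) : rel T :=
  fun u v => e u v && ([set u; v] != E0).

Definition is_bridge (e : rel T) (E0 : {set T}) : bool :=
  (E0 \in edges e) && [exists u, exists v, ~~ connect (remove_edge e E0) u v].

Definition bridges (e : rel T) : {set {set T}} :=
  [set E0 in edges e | is_bridge e E0].

End Graphs.

(* Main.v *)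
Require Import Defs.
From mathcomp Require Import all_boot.
From mathcomp Require Import zify.
From mathcomp Require Import boolp.
Set Implicit Arguments. Unset Strict Implicit. Unset Printing Implicit Defensive.

Definition rm (T : finType) (h : rel T) (R : {set {set T}}) : rel T :=
  fun u v => h u v && ([set u; v] \notin R).

Lemma edgesP (T : finType) (h : rel T) E :
  reflect (exists x y, h x y /\ E = [set x; y]) (E \in edges h).
Proof.
rewrite /edges; apply: (iffP imset2P).
- by move=> [x y _]; rewrite inE => hxy ->; exists x, y.
- by move=> [x [y [hxy ->]]]; exists x y; rewrite // inE.
Qed.

Lemma edges_rm (T : finType) (h : rel T) R : edges (rm h R) = edges h :\: R.
Proof.
apply/setP=> E; rewrite in_setD; apply/edgesP/andP.
- move=> [x [y [/andP[hxy nR] ->]]]; split=> //.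
  by apply/edgesP; exists x, y.
- move=> [nR /edgesP [x [y [hxy Exy]]]]; exists x, y; split=> //.
  by rewrite /rm hxy -Exy.
Qed.

Lemma set2C (T : finType) (x y : T) : [set x; y] = [set y; x].
Proof. by rewrite setUC. Qed.

Lemma rm_sym (T : finType) (h : rel T) R : symmetric h -> symmetric (rm h R).
Proof. by move=> hs u v; rewrite /rm hs set2C. Qed.

Lemma set2_eq (T : finType) (a b c d : T) : [set a; b] = [set c; d] ->
  (a = c /\ b = d) \/ (a = d /\ b = c).
Proof.
move=> E.
have ha : a \in [set c; d] by rewrite -E !inE eqxx.
have hb : b \in [set c; d] by rewrite -E !inE eqxx orbT.
have hc : c \in [set a; b] by rewrite E !inE eqxx.
have hd : d \in [set a; b] by rewrite E !inE eqxx orbT.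
case/set2P: ha => ha; case/set2P: hb => hb; case/set2P: hc => hc;
  case/set2P: hd => hd; subst; auto.
Qed.

Lemma next_next_neq (T : finType) (s : seq T) x :
  uniq s -> 3 <= size s -> x \in s -> next s (next s x) != x.
Proof.
move=> us ss xs; case: (rot_to xs) => i s' hr.
have us' : uniq (x :: s') by rewrite -hr rot_uniq.
have ss' : 3 <= size (x :: s') by rewrite -hr size_rot.
rewrite -!(next_rot i us) hr.
case: s' us' ss' {hr} => [|y [|z t]] //= us' _.
move: us'; rewrite !inE !negb_or => /and4P[/and3P[xy xz _] /andP[yz _] _ _].
have yx : y != x by rewrite eq_sym.
have zx : z != x by rewrite eq_sym.
by rewrite /= eqxx (negbTE yx) eqxx.
Qed.

Lemma card_cycle_edges (T : finType) (s : seq T) :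
  uniq s -> 3 <= size s -> #|cycle_edges s| = size s.
Proof.
move=> us ss; rewrite /cycle_edges card_in_imset; first by apply/card_uniqP.
move=> x y xs ys /set2_eq [[-> _] //|[E1 E2]].
have := next_next_neq us ss ys; by rewrite -E1 E2 eqxx.
Qed.

Lemma path_color (T : finType) (h : rel T) (f : T -> bool) :
  (forall x y, h x y -> f x != f y) ->
  forall x p, path h x p -> f (last x p) = f x (+) odd (size p).
Proof.
move=> hf x p; elim: p x => [|y p IH] x /=; first by rewrite addbF.
case/andP=> hxy hp; rewrite (IH _ hp); have := hf _ _ hxy.
by case: (f x); case: (f y); case: (odd (size p)).
Qed.

Lemma cycle_even (T : finType) (h : rel T) (f : T -> bool) s :
  (forall x y, h x y -> f x != f y) -> cycle h s -> ~~ odd (size s).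
Proof.
move=> hf; case: s => [|x p] //= hc.
have := path_color hf hc; rewrite last_rcons size_rcons /=.
by case: (f x); case: (odd (size p)).
Qed.

Lemma cycle_edges_sub (T : finType) (h : rel T) s :
  cycle h s -> cycle_edges s \subset edges h.
Proof.
move=> hc; apply/subsetP => E /imsetP [x xs ->]; apply/edgesP.
by exists x, (next s x); split=> //; apply: next_cycle.
Qed.

Lemma remove_edge_sym (T : finType) (e : rel T) E0 :
  symmetric e -> symmetric (remove_edge e E0).
Proof. by move=> hs u v; rewrite /remove_edge hs set2C. Qed.

Lemma cycle_not_bridge (T : finType) (e : rel T) s E :
  symmetric e -> connected_graph e -> is_cycle e s -> E \in cycle_edges s ->
  ~~ is_bridge e E.
Proof.
move=> hs hcon /and3P[us ss cs] /imsetP [z zs ->].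
case: (rot_to zs) => i s' hr.
have us' : uniq (z :: s') by rewrite -hr rot_uniq.
have ss' : 3 <= size (z :: s') by rewrite -hr size_rot.
have cs' : cycle e (z :: s') by rewrite -hr rot_cycle.
rewrite -(next_rot i us) hr.
case: s' us' ss' cs' {hr} => [|y [|a q]] //= us' _.
set q' := a :: q.
rewrite eqxx => /andP[ezy hpl].
have : path e y (rcons q' z) := hpl.
rewrite rcons_path => /andP[hp hl].
set e' := remove_edge e [set z; y].
have e'sym := remove_edge_sym [set z; y] hs.
have zq : z \notin y :: q'.
  by move: us' => /andP[].
have yq : y \notin q' by move: us' => /and3P[].
have hp' : path e' y q'.
  apply: (@sub_in_path _ (predC1 z) e e' _ y q' _ hp).
  - move=> u v; rewrite !inE => uz vz euv; rewrite /e' /remove_edge euv /=.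
    apply/eqP=> Euv; have : z \in [set u; v] by rewrite Euv !inE eqxx.
    by rewrite !inE !(eq_sym z) (negbTE uz) (negbTE vz).
  - apply/allP=> u uq; rewrite inE; apply/eqP=> uz; subst u.
    by rewrite uq in zq.
have hl' : e' (last y q') z.
  rewrite /e' /remove_edge hl /=; apply/eqP=> /set2_eq [[E1 _]|[E1 _]].
  - move: (mem_last y q'); rewrite /= E1 => h.
    by move/negP: zq; apply.
  - move: (mem_last a q); rewrite E1 => yq2.
    by move/negP: yq; apply.
have cyz : connect e' y z.
  apply/connectP; exists (rcons q' z); first by rewrite rcons_path hp' hl'.
  by rewrite last_rcons.
have czy : connect e' z y by rewrite (sym_connect_sym e'sym).
apply/andP=> [[_ /existsP [u /existsP [v]]]]; apply/negP; apply/negPn.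
apply: (connect_sub _ (hcon u v)) => a0 b eab.
case Eab: ([set a0; b] == [set z; y]).
- by case/set2_eq: (eqP Eab) => [[-> ->]|[-> ->]].
- by apply: connect1; rewrite /e' /remove_edge eab Eab.
Qed.

Lemma nonbridge_cycle (T : finType) (e : rel T) E :
  symmetric e -> irreflexive e -> E \in edges e -> ~~ is_bridge e E ->
  exists s, is_cycle e s /\ E \in cycle_edges s.
Proof.
move=> hs hi Ee; rewrite /is_bridge Ee /= negb_exists => /forallP hc.
case/edgesP: Ee => x [y [exy Exy]]; subst E.
have := hc x; rewrite negb_exists => /forallP /(_ y) /negPn /connectP [p hp Ey].
move: Ey; case: (shortenP hp) => p' hp' up' _ Ey; subst y; clear hc hp; move: exy.
have hpe : path e x p' by apply: sub_path hp' => u v /andP[].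
case: p' hp' up' hpe => [|a p'] hp' up' hpe.
  by rewrite /= hi.
case: p' hp' up' hpe => [|b p'] hp' up' hpe.
  by move: hp'; rewrite /= /remove_edge eqxx andbF.
set P := [:: a, b & p'] => exy.
exists (x :: P); split.
- rewrite /is_cycle up' /=.
  change (path e x (rcons P x)); rewrite rcons_path hpe /=.
  by rewrite hs.
- apply/imsetP; exists (last x P); first by apply: mem_last.
  rewrite -(next_rotr 1 up') lastI rotr1_rcons /= eqxx.
  by rewrite set2C.
Qed.

Definition acyclic (T : finType) (h : rel T) := forall s, ~~ is_cycle h s.

Lemma leaf_exists (T : finType) (h : rel T) x0 y0 :
  symmetric h -> irreflexive h -> acyclic h -> h x0 y0 ->
  exists z w, h z w /\ forall v, h z v -> v = w.
Proof.
move=> hs hi ac h0.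
pose P k := `[< exists x p, size p = k /\ uniq (x :: p) /\ path h x p >].
have exP : exists k, P k.
  exists 1; apply/asboolP; exists x0, [:: y0]; split=> //; split; last by rewrite /= h0.
  rewrite /= inE andbT; apply/eqP=> E; subst y0; by rewrite hi in h0.
have ubP : forall k, P k -> k <= #|T|.
  move=> k /asboolP [x [p [<- [up _]]]].
  have := max_card (mem (x :: p)); rewrite (card_uniqP up) /=; lia.
case: (ex_maxnP exP ubP) => K /asboolP [x [p [sp [up hp]]]] Kmax.
have K1 : 1 <= K by apply: Kmax; apply/asboolP; exists x0, [:: y0]; split=> //; split;
  [rewrite /= inE andbT; apply/eqP=> E; subst y0; by rewrite hi in h0 | by rewrite /= h0].
case/lastP: p sp up hp => [|q z] sp up hp; first by move: sp K1 => /= <-.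
exists z, (last x q).
have hp0 := hp.
move: hp; rewrite rcons_path => /andP[hq hwz].
split; first by rewrite hs.
move=> v hzv; apply/eqP; apply/negPn/negP => vw.
case vin: (v \in x :: rcons q z).
- move: vin; rewrite -rcons_cons mem_rcons inE => /orP[/eqP vz|vin].
    by subst v; rewrite hi in hzv.
  case/splitPl: vin hq hp0 up vw => q1 q2 Ev.
  move=> hq; rewrite rcons_cat cat_path Ev => /andP[_ hv].
  rewrite -cat_cons cat_uniq => /and3P[_ hn us2].
  rewrite last_cat Ev => vw.
  have : is_cycle h (v :: rcons q2 z).
    rewrite /is_cycle /= us2 size_rcons.
    have vn : v \notin rcons q2 z.
      apply/negP=> vi; move/negP: hn; apply; apply/hasP; exists v => //.
      by rewrite -Ev mem_last.
    rewrite vn /=; apply/andP; split.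
      by case: q2 vw {hv hq us2 hn vn} => [|? ?] //=; rewrite eqxx.
    by rewrite rcons_path hv last_rcons hzv.
  by move/negP: (ac (v :: rcons q2 z)).
- have : K.+1 <= K.
    apply: Kmax; apply/asboolP; exists x, (rcons (rcons q z) v); split.
      by rewrite size_rcons sp.
    split; first by rewrite -rcons_cons rcons_uniq vin.
    by rewrite rcons_path hp0 last_rcons hzv.
  by rewrite ltnn.
Qed.

Definition ni (T : finType) (h : rel T) : {set T} := [set x | [exists y, h x y]].

Lemma forest_bound (T : finType) (h : rel T) :
  symmetric h -> irreflexive h -> acyclic h -> #|edges h| <= #|ni h| - 1.
Proof.
have [n] : exists n, #|edges h| <= n by exists #|edges h|.
elim: n h => [|n IH] h hn hs hi ac.
  by move: hn; rewrite leqn0 => /eqP ->.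
case: (set_0Vmem (edges h)) => [->|[E0 /edgesP [x0 [y0 [h0 _]]]]].
  by rewrite cards0.
case: (leaf_exists hs hi ac h0) => z [w [hzw hleaf]].
set h' := rm h [set [set z; w]].
have hs' : symmetric h' by apply: rm_sym.
have hi' : irreflexive h' by move=> u; rewrite /h' /rm hi.
have ac' : acyclic h'.
  move=> s; apply/negP => /and3P[us ss cs]; move/negP: (ac s); apply.
  by rewrite /is_cycle us ss (sub_cycle _ cs) // => u v /andP[].
have zwE : [set z; w] \in edges h by apply/edgesP; exists z, w.
have cE : #|edges h| = #|edges h'| + 1.
  by rewrite /h' edges_rm (cardsD1 [set z; w] (edges h)) zwE addnC.
have sub : ni h' \subset ni h :\ z.
  apply/subsetP => u; rewrite !inE => /existsP [v /andP[huv nE]].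
  apply/andP; split; last by apply/existsP; exists v.
  apply/eqP=> uz; subst u; move: nE; rewrite (hleaf _ huv) inE eqxx.
  done.
have zni : z \in ni h by rewrite inE; apply/existsP; exists w.
have wni : w \in ni h by rewrite inE; apply/existsP; exists z; rewrite hs.
have c1 : #|ni h'| <= #|ni h| - 1.
  have := subset_leq_card sub; rewrite (cardsD1 z (ni h)) zni; lia.
have c2 : 2 <= #|ni h|.
  have : [set z; w] \subset ni h by apply/subsetP => u /set2P [] ->.
  move/subset_leq_card; rewrite cards2.
  have -> : z != w by apply/eqP => E; subst w; rewrite hi in hzw.
  done.
have := IH h'; rewrite -/h' => /(_ _ hs' hi' ac').
have : #|edges h'| <= n by lia.
move=> a /(_ a); lia.
Qed.

Lemma arith (m b N c r eH ni n : nat) : N = m - b -> 4 * c <= N -> 2 %| N ->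
  b <= m -> r <= c -> eH <= ni - 1 -> m - r <= eH -> ni <= n -> 4 <= n ->
  m <= 2 * ((2 * (n - 1 - b)) %/ 3) + b.
Proof. lia. Qed.

Theorem lemma4p8 (T : finType) (e : rel T) :
  simple_graph e -> cactus e -> bipartite e -> 4 <= #|T| ->
  #|edges e| <= 2 * ((2 * (#|T| - 1 - #|bridges e|)) %/ 3) + #|bridges e|.
Proof.
move=> [hs hi] [hcon hcac] [f hf] n4.
pose CC : {set {set {set T}}} :=
  [set C | `[< exists s, is_cycle e s /\ cycle_edges s = C >]].
have CCP : forall C, reflect (exists s, is_cycle e s /\ cycle_edges s = C) (C \in CC).
  by move=> C; rewrite inE; apply: asboolP.
set NB := edges e :\: bridges e.
have cov : cover CC = NB.
  apply/setP => E; rewrite /cover /NB; apply/bigcupP/idP.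
  - move=> [C /CCP [s [cs <-]] Es].
    have cs0 := cs; case/and3P: cs0 => _ _ cc.
    have Ee : E \in edges e by apply: (subsetP (cycle_edges_sub cc)).
    rewrite in_setD Ee andbT inE Ee /=.
    exact: (cycle_not_bridge hs hcon cs Es).
  - rewrite in_setD inE => /andP[/nandP[nE|nb] Ee]; first by rewrite Ee in nE.
    case: (nonbridge_cycle hs hi Ee nb) => s [cs Es].
    by exists (cycle_edges s) => //; apply/CCP; exists s.
have triv : trivIset CC.
  apply/trivIsetP => A B /CCP [s1 [c1 <-]] /CCP [s2 [c2 <-]] neq.
  apply/pred0P => E /=; apply/negP => /andP[E1 E2].
  by move/eqP: neq; apply; apply: (hcac s1 s2 c1 c2 E).
have csz : forall C, C \in CC -> 4 <= #|C| /\ 2 %| #|C|.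
  move=> C /CCP [s [cs <-]]; case/and3P: cs => us ss cc.
  rewrite card_cycle_edges // dvdn2; have := cycle_even hf cc.
  by move: ss; case: (size s) => [|[|[|[|k]]]].
have hN : #|NB| = \sum_(C in CC) #|C| by rewrite -cov; apply/esym/eqP.
have h4 : 4 * #|CC| <= #|NB|.
  rewrite hN mulnC -sum_nat_const; apply: leq_sum => C /csz [].
  done.
have h2 : 2 %| #|NB| by rewrite hN; apply: dvdn_sum => C /csz [].
have bsub : bridges e \subset edges e by apply/subsetP => E; rewrite inE => /andP[].
have hNB : #|NB| = #|edges e| - #|bridges e|.
  by rewrite /NB cardsD (setIidPr bsub).
have hb : #|bridges e| <= #|edges e| by apply: subset_leq_card.
pose rep (C : {set {set T}}) := odflt set0 [pick E in C].
pose R := [set rep C | C in CC].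
have hR : #|R| <= #|CC| by apply: leq_imset_card.
pose H := rm e R.
have hsH : symmetric H by apply: rm_sym.
have hiH : irreflexive H by move=> u; rewrite /H /rm hi.
have acH : acyclic H.
  move=> s; apply/negP => /and3P[us ss cs].
  have cse : is_cycle e s.
    by rewrite /is_cycle us ss (sub_cycle _ cs) // => u v /andP[].
  have Cin : cycle_edges s \in CC by apply/CCP; exists s.
  have : rep (cycle_edges s) \in cycle_edges s.
    rewrite /rep; case: pickP => [E //|] /=.
    case: s {us cs cse Cin} ss => [|x s] // _ /(_ [set x; next (x :: s) x]).
    by rewrite /= (imset_f (fun x0 => [set x0; next (x :: s) x0]) (mem_head x s)).
  case/imsetP => x xs Erep.
  have := next_cycle cs xs; rewrite /H /rm -Erep.
  by rewrite (imset_f rep Cin) andbF.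
have fb := forest_bound hsH hiH acH.
have hH : #|edges e| - #|R| <= #|edges H|.
  rewrite /H edges_rm cardsD.
  by apply: leq_sub2l; apply: subset_leq_card; apply: subsetIr.
have hni : #|ni H| <= #|T| by apply: max_card.
exact: (arith hNB h4 h2 hb hR fb hH hni n4).
Qed.
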